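(* Let $P$ be a finite self-dual poset admitting an order-reversing involution $\kappa:P\to P$. For $I\in\mathcal J(P)$ let $I'$ be the order ideal generated by $\kappa(\max(I))$. Let $I\in\mathcal J(P)$ and $\ell\in P$, and for a rowmotion orbit $\mathcal O$ write $(\chi_\ell-\chi_{\kappa(\ell)})(\mathcal O)=\sum_{J\in\mathcal O}(\chi_\ell(J)-\chi_{\kappa(\ell)}(J))$. (1) If $I,I'\in\mathcal O$ for some rowmotion orbit $\mathcal O$, then $(\chi_\ell-\chi_{\kappa(\ell)})(\mathcal O)=0$. (2) If $I\in\mathcal O$ and $I'\in\mathcal O'$ for rowmotion orbits $\mathcal O\neq\mathcal O'$, then $\#\mathcal O=\#\mathcal O'$ and $(\chi_\ell-\chi_{\kappa(\ell)})(\mathcal O)+(\chi_\ell-\chi_{\kappa(\ell)})(\mathcal O')=0$.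
   Context: $\mathcal J(P)$ is the set of order ideals of $P$; rowmotion $\rho:\mathcal J(P)\to\mathcal J(P)$ sends $I$ to the order ideal generated by $\min(P\setminus I)$, and a rowmotion orbit is an orbit of $\rho$. For $q\in P$, $\chi_q(I)=1$ if $q\in\max(I)$ and $0$ otherwise. *)

(* Defs.v *)
From mathcomp Require Import all_boot all_order all_algebra.
Set Implicit Arguments. Unset Strict Implicit. Unset Printing Implicit Defensive.
Import Order.TTheory GRing.Theory Num.Theory.
Local Open Scope order_scope.

Section Rowmotion.
Context {d : Order.disp_t} {P : finPOrderType d}.

Definition is_order_ideal (I : {set P}) : bool :=
  [forall x in I, forall y : P, (y <= x) ==> (y \in I)].

Definition maxs (A : {set P}) : {set P} :=
  [set x in A | [forall y in A, (x <= y) ==> (y == x)]].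
Definition mins (A : {set P}) : {set P} :=
  [set x in A | [forall y in A, (y <= x) ==> (y == x)]].

Definition ideal_gen (A : {set P}) : {set P} :=
  [set y : P | [exists x in A, y <= x]].

Definition rowmotion (I : {set P}) : {set P} := ideal_gen (mins (~: I)).

Definition rorbit (I : {set P}) : {set {set P}} :=
  [set J | fconnect rowmotion I J].

Definition is_rorbit (O : {set {set P}}) : Prop :=
  exists2 J, is_order_ideal J & O = rorbit J.

Definition chi (q : P) (I : {set P}) : int := (q \in maxs I)%:Z.

Definition chi_diff_sum (l kl : P) (O : {set {set P}}) : int :=
  (\sum_(J in O) (chi l J - chi kl J))%R.

End Rowmotion.

(* Main.v *)
Require Import Defs.
From mathcomp Require Import all_boot all_order all_algebra.
Import Order.TTheory GRing.Theory Num.Theory.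

Section Aux.
Local Set Implicit Arguments. Local Unset Strict Implicit.
Context {d : Order.disp_t} {P : finPOrderType d}.
Local Open Scope order_scope.

Lemma idealP (I : {set P}) x y : is_order_ideal I -> x \in I -> y <= x -> y \in I.
Proof. by move=> /forallP /(_ x) /implyP H /H /forallP /(_ y) /implyP. Qed.

Lemma ideal_gen_ideal (A : {set P}) : is_order_ideal (ideal_gen A).
Proof.
apply/forallP=> x; apply/implyP; rewrite inE => /existsP[a /andP[aA xa]].
apply/forallP=> y; apply/implyP=> yx; rewrite inE; apply/existsP; exists a.
by rewrite aA (le_trans yx xa).
Qed.

Lemma exists_max (A : {set P}) x : x \in A -> exists2 y, y \in maxs A & x <= y.
Proof.
move=> xA.
have [y /andP[yA xy] ymax] := @arg_maxnP _ x (fun y => (y \in A) && (x <= y))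
   (fun y => #|[set z : P | z <= y]|) ltac:(by rewrite /= xA lexx).
exists y => //; rewrite inE yA; apply/forallP=> z; apply/implyP=> zA; apply/implyP=> yz.
have sub : [set w : P | w <= y] \subset [set w : P | w <= z].
  by apply/subsetP=> w; rewrite !inE => /le_trans; apply.
have c1 : leq #|[set w : P | w <= z]| #|[set w : P | w <= y]| := ymax z ltac:(by rewrite /= zA (le_trans xy yz)).
have c2 := subset_leqif_card sub.
have ec : #|[set w : P | w <= y]| = #|[set w : P | w <= z]|.
  by case: c2 => c2 _; apply/eqP; rewrite eqn_leq c2 c1.
have := (subset_cardP ec sub) z; rewrite !inE lexx => zy.
by rewrite eq_le yz zy.
Qed.

Lemma exists_min (A : {set P}) x : x \in A -> exists2 y, y \in mins A & y <= x.
Proof.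
move=> xA.
have [y /andP[yA xy] ymax] := @arg_maxnP _ x (fun y => (y \in A) && (y <= x))
   (fun y => #|[set z : P | y <= z]|) ltac:(by rewrite /= xA lexx).
exists y => //; rewrite inE yA; apply/forallP=> z; apply/implyP=> zA; apply/implyP=> yz.
have sub : [set w : P | y <= w] \subset [set w : P | z <= w].
  by apply/subsetP=> w; rewrite !inE; apply: le_trans.
have c1 : leq #|[set w : P | z <= w]| #|[set w : P | y <= w]| := ymax z ltac:(by rewrite /= zA (le_trans yz xy)).
have c2 := subset_leqif_card sub.
have ec : #|[set w : P | y <= w]| = #|[set w : P | z <= w]|.
  by case: c2 => c2 _; apply/eqP; rewrite eqn_leq c2 c1.
have := (subset_cardP ec sub) z; rewrite !inE lexx => zy.
by rewrite eq_le yz zy.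
Qed.

Definition antichain (A : {set P}) := {in A &, forall x y, x <= y -> x = y}.

Lemma maxs_gen (A : {set P}) : antichain A -> maxs (ideal_gen A) = A.
Proof.
move=> anti; apply/setP=> x; apply/idP/idP.
  rewrite !inE => /andP[/existsP[a /andP[aA xa]] /forallP /(_ a)].
  rewrite inE xa /=; have -> : [exists x0 in A, a <= x0].
    by apply/existsP; exists a; rewrite aA lexx.
  by move=> /implyP /(_ isT) /eqP <-.
move=> xA; rewrite !inE; apply/andP; split.
  by apply/existsP; exists x; rewrite xA lexx.
apply/forallP=> y; apply/implyP; rewrite inE => /existsP[b /andP[bA yb]].
apply/implyP=> xy; have xb := anti _ _ xA bA (le_trans xy yb).
by subst b; rewrite eq_le yb xy.
Qed.

Lemma gen_maxs (I : {set P}) : is_order_ideal I -> ideal_gen (maxs I) = I.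
Proof.
move=> HI; apply/setP=> x; rewrite inE; apply/existsP/idP.
  by case=> y /andP[]; rewrite inE => /andP[yI _] xy; apply: idealP yI xy.
by move=> /exists_max[y ym xy]; exists y; rewrite ym.
Qed.

Lemma anti_maxs (A : {set P}) : antichain (maxs A).
Proof.
move=> x y; rewrite !inE => /andP[_ /forallP H] /andP[yA _] xy.
by have /implyP/(_ yA)/implyP/(_ xy)/eqP := H y.
Qed.

Lemma anti_mins (A : {set P}) : antichain (mins A).
Proof.
move=> x y; rewrite !inE => /andP[xA _] /andP[_ /forallP H] xy.
by have /implyP/(_ xA)/implyP/(_ xy)/eqP := H x.
Qed.

Lemma rho_ideal (K : {set P}) : is_order_ideal (rowmotion K).
Proof. exact: ideal_gen_ideal. Qed.

Lemma iter_ideal (J : {set P}) n : is_order_ideal J -> is_order_ideal (iter n rowmotion J).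
Proof. by case: n => // n _; rewrite iterS; apply: rho_ideal. Qed.

Lemma rorbit_ideal (J K : {set P}) : is_order_ideal J -> K \in rorbit J -> is_order_ideal K.
Proof. by move=> HJ; rewrite inE => /iter_findex <-; apply: iter_ideal. Qed.

Variable kappa : P -> P.
Context (kappa_invol : forall x, kappa (kappa x) = x)
  (kappa_rev : forall x y, x <= y -> kappa y <= kappa x).

Lemma memK (A : {set P}) x : (x \in kappa @: A) = (kappa x \in A).
Proof.
apply/imsetP/idP => [[a aA ->]|H]; first by rewrite kappa_invol.
by exists (kappa x); rewrite ?kappa_invol.
Qed.

Lemma kappa_le x y : (kappa x <= kappa y) = (y <= x).
Proof.
apply/idP/idP => [/kappa_rev|/kappa_rev] //; by rewrite !kappa_invol.
Qed.

Lemma kappa_inj : injective kappa.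
Proof. by move=> x y E; rewrite -(kappa_invol x) E kappa_invol. Qed.

Definition phi (K : {set P}) := ideal_gen (kappa @: maxs K).

Lemma anti_kmaxs (K : {set P}) : antichain (kappa @: maxs K).
Proof.
move=> x y; rewrite !memK => xm ym xy.
  apply: kappa_inj; symmetry; apply: (@anti_maxs K (kappa y) (kappa x) ym xm); by rewrite kappa_le.
Qed.

Lemma phiK (K : {set P}) : is_order_ideal K -> phi (phi K) = K.
Proof.
move=> HK; rewrite /phi (maxs_gen (@anti_kmaxs K)).
have -> : kappa @: (kappa @: maxs K) = maxs K.
  by apply/setP=> x; rewrite !memK kappa_invol.
exact: gen_maxs.
Qed.

Lemma phi_ideal (K : {set P}) : is_order_ideal (phi K).
Proof. exact: ideal_gen_ideal. Qed.

Lemma key (I : {set P}) : is_order_ideal I -> rowmotion (phi (rowmotion I)) = phi I.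
Proof.
move=> HI.
have E1 : phi (rowmotion I) = ~: (kappa @: I).
  rewrite /phi /rowmotion (maxs_gen (@anti_mins _)).
  apply/setP=> y; rewrite inE in_setC memK; apply/existsP/idP.
    case=> x /andP[]; rewrite memK inE => /andP[]; rewrite inE => kxI _ yx.
    apply/negP=> kyI; move/negP: kxI; apply; apply: idealP kyI _ => //; by rewrite kappa_le.
  move=> kyI; have [m mm mky] := @exists_min (~: I) (kappa y) ltac:(by rewrite inE).
  by exists (kappa m); rewrite memK kappa_invol mm -(kappa_invol y) kappa_le.
rewrite E1 /rowmotion setCK /phi; congr ideal_gen.
apply/setP=> x; rewrite memK !inE memK; apply/andP/andP => -[kxI H]; split=> //.
  apply/forallP=> y; apply/implyP=> yI; apply/implyP=> kxy.
  have kyx : kappa y <= x by rewrite -(kappa_invol x) kappa_le.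
  have := implyP ((forallP H) (kappa y)); rewrite memK kappa_invol => /(_ yI) /implyP.
  by move=> /(_ kyx) /eqP <-; rewrite kappa_invol.
apply/forallP=> y; apply/implyP; rewrite memK => kyI; apply/implyP=> yx.
have kxy : kappa x <= kappa y by rewrite kappa_le.
have := implyP ((forallP H) (kappa y)) kyI => /implyP /(_ kxy) /eqP /kappa_inj ->.
by [].
Qed.

Lemma rho_inj_in : {in [pred K : {set P} | is_order_ideal K] &, injective rowmotion}.
Proof.
move=> J K; rewrite !inE => HJ HK E.
have E2 : phi J = phi K by rewrite -(key HJ) E key.
by rewrite -(phiK HJ) E2 phiK.
Qed.

Lemma fsym (J K : {set P}) : is_order_ideal J -> is_order_ideal K ->
  fconnect rowmotion J K = fconnect rowmotion K J.
Proof.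
move=> HJ HK.
apply: (@fconnect_sym_in _ rowmotion [pred K : {set P} | is_order_ideal K]) => //.
  by move=> X _; rewrite inE rho_ideal.
exact: rho_inj_in.
Qed.

Lemma rorbit_eq (J K : {set P}) : is_order_ideal J -> is_order_ideal K ->
  K \in rorbit J -> rorbit K = rorbit J.
Proof.
move=> HJ HK; rewrite inE => JK; apply/setP=> X; rewrite !inE; apply/idP/idP.
  exact: connect_trans.
by apply: connect_trans; rewrite fsym.
Qed.

Lemma phi_back (J K : {set P}) : is_order_ideal J -> fconnect rowmotion J K ->
  fconnect rowmotion (phi K) (phi J).
Proof.
move=> HJ /iter_findex <-; elim: (findex _ _ _) => [|n IH]; first exact: connect0.
rewrite iterS; apply: connect_trans IH.
by rewrite -(key (iter_ideal n HJ)); apply: fconnect1.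
Qed.

Lemma phi_orbit (J : {set P}) : is_order_ideal J -> phi @: rorbit J = rorbit (phi J).
Proof.
move=> HJ; apply/setP=> X; apply/imsetP/idP.
  case=> K; rewrite !inE => JK ->.
  rewrite fsym ?phi_ideal //; exact: phi_back.
rewrite inE => JX; have HX : is_order_ideal X.
  by apply: (@rorbit_ideal (phi J)); rewrite ?phi_ideal // inE.
exists (phi X); last by rewrite phiK.
rewrite inE fsym ?phi_ideal //.
by rewrite -(phiK HJ); apply: phi_back; rewrite ?phi_ideal.
Qed.

Lemma chi_phi q (K : {set P}) : chi q (phi K) = chi (kappa q) K.
Proof. by rewrite /chi /phi (maxs_gen (@anti_kmaxs K)) memK. Qed.

Lemma sum_phi (l : P) (O : {set {set P}}) : {in O, forall K, is_order_ideal K} ->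
  chi_diff_sum l (kappa l) (phi @: O) = (- chi_diff_sum l (kappa l) O)%R.
Proof.
move=> HO; rewrite /chi_diff_sum big_imset /=.
  rewrite -sumrN; apply: eq_bigr => K _; by rewrite !chi_phi kappa_invol opprB.
by move=> x y xO yO E; rewrite -(phiK (HO x xO)) E phiK // HO.
Qed.

End Aux.

Theorem corollary5p14 (d : Order.disp_t) (P : finPOrderType d) (kappa : P -> P)
  (kappa_invol : forall x, kappa (kappa x) = x)
  (kappa_rev : forall x y, (x <= y)%O -> (kappa y <= kappa x)%O)
  (I : {set P}) (HI : is_order_ideal I) (l : P) :
  let I' := ideal_gen (kappa @: maxs I) in
  (forall O : {set {set P}}, is_rorbit O -> I \in O -> I' \in O ->
     chi_diff_sum l (kappa l) O = 0%R) /\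
  (forall O O' : {set {set P}}, is_rorbit O -> is_rorbit O' ->
     I \in O -> I' \in O' -> O != O' ->
     #|O| = #|O'| /\ (chi_diff_sum l (kappa l) O + chi_diff_sum l (kappa l) O' = 0)%R).
Proof.
move=> I'.
have HI' : is_order_ideal I' by apply: ideal_gen_ideal.
have orb : forall (O : {set {set P}}) (K : {set P}), is_rorbit O -> K \in O -> is_order_ideal K -> O = rorbit K.
  move=> O K [J HJ ->] KO HK; by rewrite (rorbit_eq kappa_invol kappa_rev HJ HK KO).
have Hid : forall K : {set P}, is_order_ideal K -> {in rorbit K, forall X, is_order_ideal X}.
  by move=> K HK X; apply: rorbit_ideal.
have PO : phi kappa @: rorbit I = rorbit I' by rewrite (phi_orbit kappa_invol kappa_rev HI).
split.
  move=> O HO IO I'O.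
  have E1 := orb _ _ HO IO HI; have E2 := orb _ _ HO I'O HI'.
  have := sum_phi kappa_invol kappa_rev l (Hid _ HI).
  rewrite PO -E1 -E2 => /eqP; rewrite -subr_eq0 opprK -mulr2n mulrn_eq0 /=.
  by move/eqP.
move=> O O' HO HO' IO I'O' _.
rewrite (orb _ _ HO IO HI) (orb _ _ HO' I'O' HI') -PO; split.
  rewrite card_in_imset // => x y xO yO E.
  by rewrite -(phiK kappa_invol kappa_rev (Hid _ HI x xO)) E (phiK kappa_invol kappa_rev (Hid _ HI y yO)).
by rewrite (sum_phi kappa_invol kappa_rev l (Hid _ HI)) addrN.
Qed.
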